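(* Let $d,\alpha,\gamma>0$, $T>0$, $l_0>0$, let $\rho:\mathbb{R}\to(0,\infty)$ be continuously differentiable and $T$-periodic with $\rho(0)=1$, and let $g$ satisfy (A1), (B1), (B2) as in the context. Let $$R_0=\frac{\alpha}{\frac{d\lambda_1}{T}\int_0^T\frac{1}{\rho^2(t)}\,dt-\frac{1}{T}\ln g'(0)},$$ where $\lambda_1=(\pi/l_0)^2$ is the principal Dirichlet eigenvalue of $-\frac{d^2}{dy^2}$ on $(0,l_0)$. If $R_0<1$, then the solution $v(t,y)$ of $$\begin{cases}v_t=\frac{d}{\rho^2(t)}v_{yy}+\left(\alpha-\frac{\dot\rho(t)}{\rho(t)}\right)v-\gamma v^2, & y\in(0,l_0),\ t\in((nT)^+,(n+1)T],\ n=0,1,2,\dots,\\ v(t,0)=v(t,l_0)=0, & t>0,\\ v(0,y)=v_0(y)\ge0,\ v_0\not\equiv0, & y\in(0,l_0),\\ v((nT)^+,y)=g(v(nT,y)), & y\in(0,l_0),\ n=0,1,2,\dots\end{cases}$$ satisfies $\lim_{t\to\infty}v(t,y)=0$ uniformly for $y\in[0,l_0]$.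
   Context: (A1): $g$ is continuously differentiable on $[0,\infty)$, $g(0)=0$, $g'(0)>0$, and for $u>0$: $g(u)>0$, $g(u)/u$ is nonincreasing, $0<g(u)/u<1$. (B1): $g$ is nondecreasing on $[0,\infty)$. (B2): there are positive constants $D$, $\sigma$ and $\nu>1$ such that $g(u)\ge g'(0)u-Du^\nu$ for $0\le u\le\sigma$. $(nT)^+$ denotes the right limit at time $nT$. *)

(* Defs.v *)
From Stdlib Require Import Reals Lra.
From Coquelicot Require Import Coquelicot.
Open Scope R_scope.

Definition cont_on_rect (a b l0 : R) (w : R -> R -> R) : Prop :=
  forall t y, a <= t <= b -> 0 <= y <= l0 ->
  forall eps, 0 < eps -> exists delta, 0 < delta /\
    forall t' y', a <= t' <= b -> 0 <= y' <= l0 ->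
      Rabs (t' - t) < delta -> Rabs (y' - y) < delta ->
      Rabs (w t' y' - w t y) < eps.

Definition piece_solves (d alpha gamma : R) (rho rho' : R -> R)
  (a b l0 : R) (w : R -> R -> R) : Prop :=
  cont_on_rect a b l0 w /\
  (exists wt wy wyy : R -> R -> R,
     forall t y, a < t < b -> 0 < y < l0 ->
       is_derive (fun s => w s y) t (wt t y) /\
       is_derive (fun z => w t z) y (wy t y) /\
       is_derive (fun z => wy t z) y (wyy t y) /\
       wt t y = d / (rho t ^ 2) * wyy t y
                + (alpha - rho' t / rho t) * w t y - gamma * (w t y) ^ 2) /\
  (forall t, a < t <= b -> w t 0 = 0 /\ w t l0 = 0).

(* v is a solution of the impulsive problem: on each ((nT)^+, (n+1)T] it
   coincides with a classical solution piece w_n whose initial value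
   (= the right limit v((nT)^+, y)) is g(v(nT, y)). *)
Definition impulsive_solution (d alpha gamma T l0 : R) (rho rho' g : R -> R)
  (v : R -> R -> R) : Prop :=
  forall n : nat, exists w : R -> R -> R,
    piece_solves d alpha gamma rho rho' (INR n * T) (INR (S n) * T) l0 w /\
    (forall y, 0 <= y <= l0 -> w (INR n * T) y = g (v (INR n * T) y)) /\
    (forall t y, INR n * T < t <= INR (S n) * T -> 0 <= y <= l0 ->
       v t y = w t y).

(* Main.v *)
Require Import Defs.
From Stdlib Require Import Reals.
From Coquelicot Require Import Coquelicot.
Open Scope R_scope.
From Stdlib Require Import Lra Lia.
From HB Require Import structures.
From mathcomp Require all_boot all_order all_algebra.
From mathcomp Require all_classical all_reals all_analysis.
From mathcomp Require Rstruct Rstruct_topology.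
Module EVT2.
Import all_boot all_order all_algebra.
Import all_classical all_reals all_analysis.
Import Rstruct Rstruct_topology.
Import Order.TTheory GRing.Theory Num.Theory.
Import numFieldNormedType.Exports.
Local Open Scope classical_set_scope.
Local Open Scope ring_scope.

Lemma rect_EVT (a b c e : R) (F : R -> R -> R) : Rle a b -> Rle c e ->
 (forall t y, Rle a t /\ Rle t b -> Rle c y /\ Rle y e -> forall eps, Rlt 0 eps -> exists delta, Rlt 0 delta /\ forall t' y', Rle a t' /\ Rle t' b -> Rle c y' /\ Rle y' e -> Rlt (Rabs(Rminus t' t)) delta -> Rlt (Rabs (Rminus y' y)) delta -> Rlt (Rabs (Rminus (F t' y') (F t y))) eps) ->
 exists t0 y0, (Rle a t0 /\ Rle t0 b) /\ (Rle c y0 /\ Rle y0 e) /\ forall t y, Rle a t /\ Rle t b -> Rle c y /\ Rle y e -> Rle (F t y) (F t0 y0).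
Proof.
move=> /RleP ab /RleP ce Fc.
pose A := (`[a, b] `*` `[c, e]) : set (R * R)%type.
have A0 : A !=set0.
  by exists (a, c); split => /=; rewrite in_itv /= lexx /= ?ab ?ce.
have cA : compact A by apply: compact_setX; apply: segment_compact.
have cf : {within A, continuous (fun p => F p.1 p.2)}.
  apply/subspace_continuousP => -[t y] [/= ht hy].
  rewrite /from_subspace /=.
  apply/(@cvgrPdist_lt _ R^o) => eps /RltP eps0.

  have [||d [/RltP d0 hd]] := Fc t y _ _ eps eps0.
    by move: ht; rewrite in_itv /= => /andP[/RleP ? /RleP ?].
    by move: hy; rewrite in_itv /= => /andP[/RleP ? /RleP ?].
  rewrite /within; apply/nbhs_ballP; exists d => //= -[t' y'] [/= bt by'] [/= ht' hy'].
  rewrite distrC; apply/RltP; apply: hd.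
  - by move: ht'; rewrite in_itv /= => /andP[/RleP ? /RleP ?].
  - by move: hy'; rewrite in_itv /= => /andP[/RleP ? /RleP ?].
  - by apply/RltP; move: bt; rewrite /ball /= distrC.
  - by apply/RltP; move: by'; rewrite /ball /= distrC.
have [[t0 y0] /set_mem [/= h1 h2] hmax] := compact_EVT_max A0 cA cf.
exists t0, y0; split; first by move: h1; rewrite in_itv /= => /andP[/RleP ? /RleP ?].
split; first by move: h2; rewrite in_itv /= => /andP[/RleP ? /RleP ?].
move=> t y [/RleP h3 /RleP h4] [/RleP h5 /RleP h6]; apply/RleP.
apply: (hmax (t, y)); apply/mem_set; split; rewrite /= in_itv /= ?h3 ?h4 ?h5 ?h6 //.
Qed.
End EVT2.


Lemma cont_eps (f : R -> R) x : continuous f x ->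
  forall eps, 0 < eps -> exists delta, 0 < delta /\
    forall x', Rabs (x' - x) < delta -> Rabs (f x' - f x) < eps.
Proof.
  intros Hc eps He.
  assert (H := Hc (ball (f x) (mkposreal eps He)) (locally_ball _ _)).
  destruct H as [dl Hd]. exists (pos dl). split. apply cond_pos.
  intros x' Hx'. apply (Hd x'). exact Hx'.
Qed.

Lemma cor_sub a b a' b' l0 w : a <= a' -> b' <= b ->
  cont_on_rect a b l0 w -> cont_on_rect a' b' l0 w.
Proof.
  intros h1 h2 H t y ht hy eps he.
  destruct (H t y ltac:(lra) hy eps he) as [dl [hd H']].
  exists dl; split; auto. intros t' y' ht' hy'. apply H'; lra.
Qed.

Lemma cor_plus a b l0 u w : cont_on_rect a b l0 u -> cont_on_rect a b l0 w ->
  cont_on_rect a b l0 (fun t y => u t y + w t y).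
Proof.
  intros Hu Hw t y ht hy eps he.
  destruct (Hu t y ht hy (eps/2) ltac:(lra)) as [d1 [hd1 H1]].
  destruct (Hw t y ht hy (eps/2) ltac:(lra)) as [d2 [hd2 H2]].
  exists (Rmin d1 d2); split. apply Rmin_pos; auto.
  intros t' y' ht' hy' a1 a2.
  assert (Rmin d1 d2 <= d1) by apply Rmin_l. assert (Rmin d1 d2 <= d2) by apply Rmin_r.
  specialize (H1 t' y' ht' hy' ltac:(lra) ltac:(lra)).
  specialize (H2 t' y' ht' hy' ltac:(lra) ltac:(lra)).
  replace (u t' y' + w t' y' - (u t y + w t y)) with ((u t' y' - u t y) + (w t' y' - w t y)) by ring.
  eapply Rle_lt_trans. apply Rabs_triang. lra.
Qed.

Lemma cor_opp a b l0 w : cont_on_rect a b l0 w ->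
  cont_on_rect a b l0 (fun t y => - w t y).
Proof.
  intros Hw t y ht hy eps he.
  destruct (Hw t y ht hy eps he) as [d1 [hd1 H1]].
  exists d1; split; auto. intros t' y' ht' hy' a1 a2.
  replace (- w t' y' - - w t y) with (- (w t' y' - w t y)) by ring.
  rewrite Rabs_Ropp. auto.
Qed.

Lemma cor_mul a b l0 u w : cont_on_rect a b l0 u -> cont_on_rect a b l0 w ->
  cont_on_rect a b l0 (fun t y => u t y * w t y).
Proof.
  intros Hu Hw t y ht hy eps he.
  set (U := Rabs (u t y)). set (W := Rabs (w t y)).
  assert (hU : 0 <= U) by apply Rabs_pos. assert (hW : 0 <= W) by apply Rabs_pos.
  set (e1 := Rmin 1 (eps / (2 * (W + 1)))).
  assert (he1 : 0 < e1). { apply Rmin_pos. lra. apply Rdiv_lt_0_compat; lra. }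
  assert (he1' : e1 * (W + 1) <= eps / 2).
  { assert (e1 <= eps / (2 * (W + 1))) by apply Rmin_r.
    apply Rmult_le_compat_r with (r := W + 1) in H; [|lra].
    replace (eps / (2 * (W + 1)) * (W + 1)) with (eps / 2) in H by (field; lra). lra. }
  assert (he1'' : e1 <= 1) by apply Rmin_l.
  set (e2 := eps / (2 * (U + 1))).
  assert (he2 : 0 < e2) by (apply Rdiv_lt_0_compat; lra).
  assert (he2' : e2 * (U + 1) = eps / 2) by (unfold e2; field; lra).
  destruct (Hu t y ht hy e1 he1) as [d1 [hd1 H1]].
  destruct (Hw t y ht hy e2 he2) as [d2 [hd2 H2]].
  exists (Rmin d1 d2); split. apply Rmin_pos; auto.
  intros t' y' ht' hy' a1 a2.
  assert (Rmin d1 d2 <= d1) by apply Rmin_l. assert (Rmin d1 d2 <= d2) by apply Rmin_r.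
  specialize (H1 t' y' ht' hy' ltac:(lra) ltac:(lra)).
  specialize (H2 t' y' ht' hy' ltac:(lra) ltac:(lra)).
  replace (u t' y' * w t' y' - u t y * w t y) with
    ((u t' y' - u t y) * w t y + u t' y' * (w t' y' - w t y)) by ring.
  eapply Rle_lt_trans. apply Rabs_triang. rewrite !Rabs_mult.
  assert (Rabs (u t' y') <= U + 1).
  { replace (u t' y') with (u t y + (u t' y' - u t y)) by ring.
    eapply Rle_trans. apply Rabs_triang. unfold U; lra. }
  assert (Rabs (u t' y' - u t y) * W <= e1 * (W+1)).
  { apply Rmult_le_compat; try apply Rabs_pos; lra. }
  assert (Rabs (u t' y') * Rabs (w t' y' - w t y) <= (U + 1) * e2).
  { apply Rmult_le_compat; try apply Rabs_pos; lra. }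
  assert (Rabs (u t' y') * Rabs (w t' y' - w t y) < (U + 1) * e2 \/ Rabs (u t' y' - u t y) * W < e1 * (W+1)).
  { destruct (Req_dec (Rabs (w t' y' - w t y)) 0) as [E|E].
    - left. rewrite E. rewrite Rmult_0_r. nra.
    - left. apply Rle_lt_trans with ((U+1) * Rabs (w t' y' - w t y)).
      apply Rmult_le_compat_r; [apply Rabs_pos|lra].
      apply Rmult_lt_compat_l; lra. }
  unfold W in *. nra.
Qed.

Lemma cor_t a b l0 (f : R -> R) : (forall t, a <= t <= b -> continuous f t) ->
  cont_on_rect a b l0 (fun t y => f t).
Proof.
  intros Hf t y ht hy eps he.
  destruct (cont_eps f t (Hf t ht) eps he) as [d [hd H]].
  exists d; split; auto.
Qed.

Lemma cor_y a b l0 (f : R -> R) : (forall y, 0 <= y <= l0 -> continuous f y) ->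
  cont_on_rect a b l0 (fun t y => f y).
Proof.
  intros Hf t y ht hy eps he.
  destruct (cont_eps f y (Hf y hy) eps he) as [d [hd H]].
  exists d; split; auto.
Qed.


Lemma FD (f : R -> R) t0 c d0 : 0 < d0 -> is_derive f t0 c ->
  (forall s, t0 - d0 <= s <= t0 -> f s <= f t0) -> 0 <= c.
Proof.
  intros hd Hd Hm. apply is_derive_Reals in Hd.
  destruct (Rle_or_lt 0 c) as [|hc]; auto. exfalso.
  destruct (Hd (- c / 2) ltac:(lra)) as [dl Hdl].
  set (h := - Rmin dl d0 / 2).
  assert (Rmin dl d0 <= dl) by apply Rmin_l. assert (Rmin dl d0 <= d0) by apply Rmin_r.
  assert (0 < Rmin dl d0) by (apply Rmin_pos; [apply cond_pos|lra]).
  assert (hh : h < 0) by (unfold h; lra).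
  assert (hh' : Rabs h < dl) by (rewrite Rabs_left; unfold h; lra).
  specialize (Hdl h ltac:(lra) hh').
  specialize (Hm (t0 + h) ltac:(unfold h; lra)).
  apply Rabs_def2 in Hdl. destruct Hdl as [h1 h2].
  set (Q := (f (t0 + h) - f t0) / h) in *.
  assert (f (t0 + h) - f t0 = Q * h) by (unfold Q; field; lra).
  nra.
Qed.

Lemma SD (f f' : R -> R) p q y0 c : p < y0 < q ->
  (forall x, p < x < q -> is_derive f x (f' x)) -> is_derive f' y0 c ->
  (forall x, p < x < q -> f x <= f y0) -> c <= 0.
Proof.
  intros hy Hf Hd Hm. apply is_derive_Reals in Hd.
  destruct (Rle_or_lt c 0) as [|hc]; auto. exfalso.
  destruct (Hd (c / 2) ltac:(lra)) as [dl Hdl].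
  set (m := Rmin dl (Rmin (y0 - p) (q - y0))).
  assert (m <= dl) by apply Rmin_l.
  assert (m <= y0 - p) by (eapply Rle_trans; [apply Rmin_r|apply Rmin_l]).
  assert (m <= q - y0) by (eapply Rle_trans; [apply Rmin_r|apply Rmin_r]).
  assert (0 < m) by (apply Rmin_pos; [apply cond_pos|apply Rmin_pos; lra]).
  assert (Hf' : forall x, p < x < q -> derivable_pt_lim f x (f' x))
    by (intros; apply is_derive_Reals; auto).
  destruct (Rle_or_lt 0 (f' y0)) as [Hp|Hn].
  -
    set (b := y0 + m / 2).
    destruct (MVT_cor2 f f' y0 b ltac:(unfold b; lra)) as [xi [Hxi Hxi']].
    { intros x hx. apply Hf'. unfold b in hx. lra. }
    assert (f' xi > 0).
    { set (h := xi - y0).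
      assert (Hh0 : h <> 0) by (unfold h; lra).
      assert (Hh1 : Rabs h < dl) by (rewrite Rabs_right; unfold h, b in *; lra).
      specialize (Hdl h Hh0 Hh1).
      replace (y0 + h) with xi in Hdl by (unfold h; ring).
      apply Rabs_def2 in Hdl. destruct Hdl as [h1 h2].
      set (Q := (f' xi - f' y0) / h) in *.
      assert (f' xi - f' y0 = Q * h) by (unfold Q; field; auto).
      assert (0 < h) by (unfold h; lra). nra. }
    specialize (Hm b ltac:(unfold b; lra)). unfold b in *. nra.
  - set (b := y0 - m / 2).
    destruct (MVT_cor2 f f' b y0 ltac:(unfold b; lra)) as [xi [Hxi Hxi']].
    { intros x hx. apply Hf'. unfold b in hx. lra. }
    assert (f' xi < 0).
    { set (h := xi - y0).
      assert (Hh0 : h <> 0) by (unfold h; lra).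
      assert (Hh1 : Rabs h < dl) by (rewrite Rabs_left; unfold h, b in *; lra).
      specialize (Hdl h Hh0 Hh1).
      replace (y0 + h) with xi in Hdl by (unfold h; ring).
      apply Rabs_def2 in Hdl. destruct Hdl as [h1 h2].
      set (Q := (f' xi - f' y0) / h) in *.
      assert (f' xi - f' y0 = Q * h) by (unfold Q; field; auto).
      assert (h < 0) by (unfold h; lra). nra. }
    specialize (Hm b ltac:(unfold b; lra)). unfold b in *. nra.
Qed.


Lemma MaxP a b l0 (D : R -> R) H (z zt zy zyy : R -> R -> R) :
  a < b -> 0 < l0 -> cont_on_rect a b l0 z ->
  (forall t y, a < t < b -> 0 < y < l0 ->
     is_derive (fun s => z s y) t (zt t y) /\ is_derive (fun x => z t x) y (zy t y) /\
     is_derive (fun x => zy t x) y (zyy t y) /\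
     (0 < z t y -> zt t y <= D t * zyy t y + H * z t y)) ->
  (forall t, a < t < b -> 0 < D t) ->
  (forall y, 0 <= y <= l0 -> z a y <= 0) ->
  (forall t, a < t <= b -> z t 0 <= 0 /\ z t l0 <= 0) ->
  forall t y, a <= t <= b -> 0 <= y <= l0 -> z t y <= 0.
Proof.
  intros hab hl0 Hc Hd HD Hi Hb t y ht hy.
  destruct (Rle_or_lt (z t y) 0) as [|Hpos]; auto. exfalso.
  assert (ht' : a < t). { destruct (Req_dec t a); [subst; specialize (Hi y hy); lra|lra]. }
  assert (hy' : 0 < y < l0).
  { destruct (Hb t ltac:(lra)) as [B0 B1].
    destruct (Req_dec y 0); [subst; lra|]. destruct (Req_dec y l0); [subst; lra|]. lra. }
  assert (Ht2 : exists t2, a < t2 < b /\ 0 < z t2 y).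
  { destruct (Rlt_or_le t b) as [hlt|hge].
    - exists t; split; [lra|auto].
    - assert (t = b) by lra. subst t.
      destruct (Hc b y ltac:(lra) hy (z b y) Hpos) as [dl [hdl Hdl]].
      set (t2 := b - Rmin dl (b - a) / 2).
      assert (Rmin dl (b-a) <= dl) by apply Rmin_l. assert (Rmin dl (b-a) <= b - a) by apply Rmin_r.
      assert (0 < Rmin dl (b-a)) by (apply Rmin_pos; lra).
      exists t2; split. unfold t2; lra.
      specialize (Hdl t2 y ltac:(unfold t2; lra) hy).
      assert (Q1 : Rabs (t2 - b) < dl) by (rewrite Rabs_left; unfold t2; lra).
      assert (Q2 : Rabs (y - y) < dl) by (replace (y - y) with 0 by ring; rewrite Rabs_R0; lra).
      specialize (Hdl Q1 Q2). apply Rabs_def2 in Hdl. lra. }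
  destruct Ht2 as [t2 [ht2 hzt2]].
  set (L := H + 1).
  set (zz := fun s x => exp (- L * (s - a)) * z s x).
  assert (Hcz : cont_on_rect a t2 l0 zz).
  { apply cor_mul. apply cor_t. intros s _.
    apply (ex_derive_continuous (fun s => exp (- L * (s - a)))). auto_derive. auto.
    apply cor_sub with a b; try lra; auto. }
  destruct (EVT2.rect_EVT a t2 0 l0 zz ltac:(lra) ltac:(lra) Hcz) as [t0 [y0 [ht0 [hy0 Hmax]]]].
  assert (Hz0 : 0 < z t0 y0).
  { specialize (Hmax t2 y ltac:(lra) ltac:(lra)). unfold zz in Hmax.
    assert (0 < exp (- L * (t2 - a))) by apply exp_pos.
    assert (0 < exp (- L * (t0 - a))) by apply exp_pos. nra. }
  assert (ht0' : a < t0). { destruct (Req_dec t0 a); [subst; specialize (Hi y0 hy0); lra|lra]. }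
  assert (hy0' : 0 < y0 < l0).
  { destruct (Hb t0 ltac:(lra)) as [B0 B1].
    destruct (Req_dec y0 0); [subst; lra|]. destruct (Req_dec y0 l0); [subst; lra|]. lra. }
  destruct (Hd t0 y0 ltac:(lra) hy0') as [D1 [D2 [D3 D4]]].
  specialize (D4 Hz0).
  assert (HE : is_derive (fun s => exp (- L * (s - a))) t0 (- L * exp (- L * (t0 - a)))).
  { auto_derive. auto. rewrite Rmult_1_r. reflexivity. }
  assert (Hzz : is_derive (fun s => zz s y0) t0
      (- L * exp (- L * (t0 - a)) * z t0 y0 + exp (- L * (t0 - a)) * zt t0 y0)).
  { unfold zz. apply (is_derive_mult (fun s => exp (- L * (s - a))) (fun s => z s y0)); auto.
    intros; apply Rmult_comm. }
  assert (F1 := FD _ t0 _ (t0 - a) ltac:(lra) Hzz).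
  assert (F1' : 0 <= - L * exp (- L * (t0 - a)) * z t0 y0 + exp (- L * (t0 - a)) * zt t0 y0).
  { apply F1. intros s hs. apply Hmax; lra. }
  assert (S1 : zyy t0 y0 <= 0).
  { apply (SD (fun x => z t0 x) (zy t0) 0 l0 y0); auto.
    - intros x hx. apply (Hd t0 x ltac:(lra) hx).
    - intros x hx. specialize (Hmax t0 x ltac:(lra) ltac:(lra)). unfold zz in Hmax.
      assert (0 < exp (- L * (t0 - a))) by apply exp_pos.
      apply Rmult_le_reg_l with (exp (- L * (t0 - a))); auto. }
  assert (0 < exp (- L * (t0 - a))) by apply exp_pos.
  assert (0 < D t0) by (apply HD; lra).
  assert (L * z t0 y0 <= zt t0 y0).
  { apply Rmult_le_reg_l with (exp (- L * (t0 - a))); auto. nra. }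
  assert (D t0 * zyy t0 y0 <= 0) by nra.
  unfold L in *. nra.
Qed.


Lemma rect_max a b l0 F : a <= b -> 0 <= l0 -> cont_on_rect a b l0 F ->
  exists M, forall t y, a <= t <= b -> 0 <= y <= l0 -> F t y <= M.
Proof.
  intros h1 h2 Hc.
  destruct (EVT2.rect_EVT a b 0 l0 F h1 h2 Hc) as [t0 [y0 [_ [_ Hm]]]].
  exists (F t0 y0); auto.
Qed.

Lemma piece_nonneg d alpha gamma rho rho' a b l0 w :
  a < b -> 0 < l0 -> 0 < d -> 0 < gamma -> (forall t, 0 < rho t) ->
  (forall t, a <= t <= b -> continuous (fun s => rho' s / rho s) t) ->
  piece_solves d alpha gamma rho rho' a b l0 w ->
  (forall y, 0 <= y <= l0 -> 0 <= w a y) ->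
  forall t y, a <= t <= b -> 0 <= y <= l0 -> 0 <= w t y.
Proof.
  intros hab hl0 hd hg hrho hcont [Hc [[wt [wy [wyy Hd]]] Hb]] Hi.
  destruct (rect_max a b l0 (fun t y => - (rho' t / rho t)) ltac:(lra) ltac:(lra)) as [C HC].
  { apply cor_t. intros t ht. apply (continuous_opp (fun s => rho' s / rho s)). auto. }
  destruct (rect_max a b l0 (fun t y => - w t y) ltac:(lra) ltac:(lra)) as [Z HZ].
  { apply cor_opp; auto. }
  intros t y ht hy.
  cut (- w t y <= 0). lra.
  apply (MaxP a b l0 (fun t => d / rho t ^ 2) (alpha + C + gamma * Z) (fun t y => - w t y)
    (fun t y => - wt t y) (fun t y => - wy t y) (fun t y => - wyy t y)); auto.
  - apply cor_opp; auto.
  - intros s x hs hx. destruct (Hd s x hs hx) as [D1 [D2 [D3 D4]]].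
    split; [|split; [|split]].
    + apply (is_derive_opp (fun s => w s x)). auto.
    + apply (is_derive_opp (fun z => w s z)). auto.
    + apply (is_derive_opp (fun z => wy s z)). auto.
    + intros Hz. rewrite D4.
      specialize (HC s x ltac:(lra) ltac:(lra)). specialize (HZ s x ltac:(lra) ltac:(lra)).
      simpl in HC, HZ.
      assert ((alpha - rho' s / rho s + gamma * (- w s x)) * (- w s x) <= (alpha + C + gamma * Z) * (- w s x)).
      { apply Rmult_le_compat_r; [lra|]. assert (gamma * - w s x <= gamma * Z) by (apply Rmult_le_compat_l; lra). lra. }
      match goal with |- ?L <= _ => assert (EE : L = d / rho s ^ 2 * - wyy s x + (alpha - rho' s / rho s + gamma * - w s x) * - w s x) by ring end.
      rewrite EE. lra.
  - intros s hs. assert (0 < rho s) by auto.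
    apply Rdiv_lt_0_compat; auto. apply pow_lt; auto.
  - intros x hx. specialize (Hi x hx). lra.
  - intros s hs. destruct (Hb s hs) as [B1 B2]. rewrite B1, B2. lra.
Qed.

Lemma piece_upper d alpha gamma rho rho' a b l0 w (W Wt Wy Wyy : R -> R -> R) :
  a < b -> 0 < l0 -> 0 < d -> 0 < gamma -> (forall t, 0 < rho t) ->
  (forall t, a <= t <= b -> continuous (fun s => rho' s / rho s) t) ->
  piece_solves d alpha gamma rho rho' a b l0 w ->
  cont_on_rect a b l0 W ->
  (forall t y, a < t < b -> 0 < y < l0 ->
     is_derive (fun s => W s y) t (Wt t y) /\ is_derive (fun x => W t x) y (Wy t y) /\
     is_derive (fun x => Wy t x) y (Wyy t y) /\
     d / rho t ^ 2 * Wyy t y + (alpha - rho' t / rho t) * W t y <= Wt t y) ->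
  (forall t, a < t <= b -> 0 <= W t 0 /\ 0 <= W t l0) ->
  (forall y, 0 <= y <= l0 -> w a y <= W a y) ->
  forall t y, a <= t <= b -> 0 <= y <= l0 -> w t y <= W t y.
Proof.
  intros hab hl0 hd hg hrho hcont [Hc [[wt [wy [wyy Hd]]] Hb]] HWc HWd HWb Hi.
  destruct (rect_max a b l0 (fun t y => - (rho' t / rho t)) ltac:(lra) ltac:(lra)) as [C HC].
  { apply cor_t. intros t ht. apply (continuous_opp (fun s => rho' s / rho s)). auto. }
  intros t y ht hy.
  cut (w t y - W t y <= 0). lra.
  apply (MaxP a b l0 (fun t => d / rho t ^ 2) (alpha + C) (fun t y => w t y - W t y)
    (fun t y => wt t y - Wt t y) (fun t y => wy t y - Wy t y) (fun t y => wyy t y - Wyy t y)); auto.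
  - apply cor_plus; auto. apply cor_opp; auto.
  - intros s x hs hx. destruct (Hd s x hs hx) as [D1 [D2 [D3 D4]]].
    destruct (HWd s x hs hx) as [E1 [E2 [E3 E4]]].
    split; [|split; [|split]].
    + apply (is_derive_minus (fun s => w s x)); auto.
    + apply (is_derive_minus (fun z => w s z)); auto.
    + apply (is_derive_minus (fun z => wy s z)); auto.
    + intros Hz. rewrite D4.
      specialize (HC s x ltac:(lra) ltac:(lra)). simpl in HC.
      assert ((alpha - rho' s / rho s) * (w s x - W s x) <= (alpha + C) * (w s x - W s x)).
      { apply Rmult_le_compat_r; lra. }
      assert (0 <= gamma * w s x ^ 2) by (apply Rmult_le_pos; [lra|apply pow2_ge_0]).
      nra.
  - intros s hs. assert (0 < rho s) by auto.
    apply Rdiv_lt_0_compat; auto. apply pow_lt; auto.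
  - intros x hx. specialize (Hi x hx). lra.
  - intros s hs. destruct (Hb s hs) as [B1 B2]. destruct (HWb s hs). rewrite B1, B2. lra.
Qed.


Lemma exp_le' x y : x <= y -> exp x <= exp y.
Proof. intros H; destruct (Rle_lt_or_eq_dec _ _ H) as [h|h]; [left; apply exp_increasing; auto|subst; lra]. Qed.

Lemma per_n (rho : R -> R) T : (forall t, rho (t + T) = rho t) ->
  forall n t, rho (t + INR n * T) = rho t.
Proof.
  intros Hp n; induction n as [|n IH]; intros t.
  - simpl. rewrite Rmult_0_l, Rplus_0_r. auto.
  - rewrite S_INR. replace (t + (INR n + 1) * T) with ((t + INR n * T) + T) by ring.
    rewrite Hp. auto.
Qed.

Lemma ball_R (x e y : R) : ball x e y -> Rabs (y - x) < e.
Proof. unfold ball; simpl; unfold AbsRing_ball, abs, minus, plus, opp; simpl. auto. Qed.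

Lemma g_facts (g g' : R -> R) :
  filterlim (fun h => (g h - g 0) / h) (at_right 0) (locally (g' 0)) ->
  g 0 = 0 ->
  (forall u1 u2, 0 < u1 -> u1 <= u2 -> g u2 / u2 <= g u1 / u1) ->
  (forall u, 0 < u -> 0 < g u / u < 1) ->
  g' 0 <= 1 /\ forall u, 0 <= u -> g u <= g' 0 * u.
Proof.
  intros Hl Hg0 Hni Hr.
  assert (Hev : forall eps, 0 < eps -> exists dl, 0 < dl /\ forall h, 0 < h < dl ->
     Rabs (g h / h - g' 0) < eps).
  { intros eps he.
    destruct (Hl (ball (g' 0) (mkposreal eps he)) (locally_ball _ _)) as [dl Hd].
    exists (pos dl); split; [apply cond_pos|]. intros h hh.
    assert (B : ball 0 dl h).
    { unfold ball; simpl; unfold AbsRing_ball, abs, minus, plus, opp; simpl.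
      rewrite Ropp_0, Rplus_0_r, Rabs_right; lra. }
    specialize (Hd h B ltac:(lra)). apply ball_R in Hd. simpl in Hd.
    rewrite Hg0, Rminus_0_r in Hd. auto. }
  split.
  - destruct (Rle_or_lt (g' 0) 1) as [|H]; auto. exfalso.
    destruct (Hev (g' 0 - 1) ltac:(lra)) as [dl [hd Hd]].
    specialize (Hd (dl/2) ltac:(lra)). specialize (Hr (dl/2) ltac:(lra)).
    apply Rabs_def2 in Hd. lra.
  - intros u hu. destruct (Req_dec u 0) as [->|hu0].
    + rewrite Hg0; lra.
    + assert (hu' : 0 < u) by lra.
      cut (g u / u <= g' 0).
      { intros H. apply Rmult_le_compat_r with (r := u) in H; [|lra].
        replace (g u / u * u) with (g u) in H by (field; lra). lra. }
      destruct (Rle_or_lt (g u / u) (g' 0)) as [|H]; auto. exfalso.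
      destruct (Hev (g u / u - g' 0) ltac:(lra)) as [dl [hd Hd]].
      set (h := Rmin (dl/2) u).
      assert (h <= dl/2) by apply Rmin_l. assert (h <= u) by apply Rmin_r.
      assert (0 < h) by (apply Rmin_pos; lra).
      specialize (Hd h ltac:(lra)). specialize (Hni h u ltac:(lra) ltac:(lra)).
      apply Rabs_def2 in Hd. lra.
Qed.

Lemma time_dec T t : 0 < T -> 0 < t -> exists n, INR n * T < t <= INR (S n) * T.
Proof.
  intros hT ht.
  destruct (archimed_cor1 (T / t) ltac:(apply Rdiv_lt_0_compat; lra)) as [m [hm hm0]].
  assert (Hm : t <= INR m * T).
  { assert (0 < INR m) by (apply lt_0_INR; lia).
    apply Rmult_lt_compat_r with (r := t * INR m) in hm; [|nra].
    replace (/ INR m * (t * INR m)) with t in hm by (field; lra).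
    replace (T / t * (t * INR m)) with (INR m * T) in hm by (field; lra). lra. }
  clear hm hm0. induction m as [|m IH].
  - simpl in Hm. lra.
  - destruct (Rle_or_lt t (INR m * T)) as [h|h]; auto.
    exists m; split; auto.
Qed.

Lemma sin_lower k dl l0 y : 0 < dl -> 0 < l0 -> k * (l0 + 2 * dl) = PI -> 0 <= y <= l0 ->
  0 < sin (k * dl) <= sin (k * (y + dl)).
Proof.
  intros hd hl hk hy.
  assert (hk0 : 0 < k).
  { destruct (Rle_or_lt k 0); auto. assert (k * (l0 + 2 * dl) <= 0) by nra. pose proof PI_RGT_0. lra. }
  assert (h1 : k * dl < PI / 2).
  { assert (k * dl * 2 < PI) by nra. lra. }
  assert (0 < k * dl) by nra.
  split. apply sin_gt_0; lra.
  set (th := k * (y + dl)).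
  assert (k * dl <= th <= PI - k * dl) by (unfold th; nra).
  destruct (Rle_or_lt th (PI / 2)).
  - destruct (Req_dec th (k * dl)) as [E|E]. rewrite E; lra.
    left; apply sin_increasing_1; lra.
  - rewrite <- (sin_PI_x th).
    destruct (Req_dec (PI - th) (k * dl)) as [E|E]. rewrite E; lra.
    left; apply sin_increasing_1; lra.
Qed.


Lemma E_der (rho rho' P : R -> R) alpha d mu a t fv : is_derive rho t (rho' t) -> 0 < rho t ->
  is_derive P (t - a) fv -> fv = 1 / (rho t)^2 ->
  is_derive (fun s => exp (alpha*(s-a) - d*mu*P(s-a)) / rho s) t
   (exp (alpha*(t-a) - d*mu*P(t-a)) / rho t * (alpha - d*mu/(rho t)^2 - rho' t / rho t)).
Proof.
  intros Hr hr HP Hf.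
  auto_derive.
  - repeat split; try (eexists; eauto); lra.
  - replace (Derive (fun x : R => P x) (t + - a)) with fv by (symmetry; apply is_derive_unique; auto).
    replace (Derive (fun x : R => rho x) t) with (rho' t) by (symmetry; apply is_derive_unique; auto).
    rewrite Hf. unfold Rminus. field. lra.
Qed.

Lemma P_facts (rho : R -> R) : (forall t, 0 < rho t) -> (forall t, ex_derive rho t) ->
  (forall t, continuous (fun t => 1 / (rho t)^2) t) /\
  (forall s, is_derive (RInt (fun t => 1 / (rho t)^2) 0) s (1 / (rho s)^2)) /\
  RInt (fun t => 1 / (rho t)^2) 0 0 = 0 /\
  (forall s, 0 <= s -> 0 <= RInt (fun t => 1 / (rho t)^2) 0 s) /\
  (forall s, 0 < s -> 0 < RInt (fun t => 1 / (rho t)^2) 0 s).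
Proof.
  intros hp hc.
  assert (Hc : forall t, continuous (fun t => 1 / (rho t)^2) t).
  { intros t. apply (ex_derive_continuous (fun t => 1 / (rho t)^2)). auto_derive. specialize (hp t). repeat split; auto. rewrite Rmult_1_r. apply Rgt_not_eq. nra. }
  assert (Hd : forall s, is_derive (RInt (fun t => 1 / (rho t)^2) 0) s (1 / (rho s)^2)).
  { intros s. apply (is_derive_RInt (fun t => 1 / (rho t)^2) (RInt (fun t => 1 / (rho t)^2) 0) 0 s); auto.
    apply filter_forall. intros b. apply (RInt_correct (V:=R_CompleteNormedModule)). apply (ex_RInt_continuous (V:=R_CompleteNormedModule)). intros; apply Hc. }
  assert (H0 : RInt (fun t => 1 / (rho t)^2) 0 0 = 0) by apply (RInt_point (V:=R_CompleteNormedModule)).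
  assert (Hpos : forall s, 0 < s -> 0 < RInt (fun t => 1 / (rho t)^2) 0 s).
  { intros s hs.
    destruct (MVT_cor2 (RInt (fun t => 1 / (rho t)^2) 0) (fun s => 1 / (rho s)^2) 0 s hs) as [c [Hc1 Hc2]].
    { intros c _. apply is_derive_Reals. auto. }
    rewrite H0 in Hc1. rewrite Rminus_0_r in Hc1. rewrite Hc1.
    apply Rmult_lt_0_compat; [|lra]. specialize (hp c).
    apply Rdiv_lt_0_compat; [lra|]. apply pow_lt; auto. }
  split; [auto|split; [auto|split; [auto|split; [|auto]]]].
  intros s0 hs. destruct (Req_dec s0 0) as [->|]. rewrite H0; lra. left; apply Hpos; lra.
Qed.


Theorem theorem3p2
  (d alpha gamma T l0 : R) (rho rho' g g' : R -> R) (v : R -> R -> R)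
  (hd : 0 < d) (halpha : 0 < alpha) (hgamma : 0 < gamma)
  (hT : 0 < T) (hl0 : 0 < l0)
  (hrho_pos : forall t, 0 < rho t)
  (hrho_der : forall t, is_derive rho t (rho' t))
  (hrho'_cont : forall t, continuous rho' t)
  (hrho_per : forall t, rho (t + T) = rho t)
  (hrho0 : rho 0 = 1)
  (hg_der : forall u, 0 < u -> is_derive g u (g' u))
  (hg_der0 : filterlim (fun h => (g h - g 0) / h) (at_right 0) (locally (g' 0)))
  (hg'_cont : forall u, 0 <= u ->
     filterlim g' (within (fun x => 0 <= x) (locally u)) (locally (g' u)))
  (hg0 : g 0 = 0) (hg'0 : 0 < g' 0)
  (hg_pos : forall u, 0 < u -> 0 < g u)
  (hg_ratio_noninc : forall u1 u2, 0 < u1 -> u1 <= u2 -> g u2 / u2 <= g u1 / u1)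
  (hg_ratio : forall u, 0 < u -> 0 < g u / u < 1)
  (hg_mono : forall u1 u2, 0 <= u1 -> u1 <= u2 -> g u1 <= g u2)
  (hB2 : exists D sigma nu, 0 < D /\ 0 < sigma /\ 1 < nu /\
     forall u, 0 < u <= sigma -> g u >= g' 0 * u - D * Rpower u nu)
  (hR0 : alpha / (d * (PI / l0) ^ 2 / T * RInt (fun t => 1 / (rho t) ^ 2) 0 T
                  - 1 / T * ln (g' 0)) < 1)
  (hv0_nonneg : forall y, 0 <= y <= l0 -> 0 <= v 0 y)
  (hv0_nz : exists y, 0 < y < l0 /\ v 0 y <> 0)
  (hsol : impulsive_solution d alpha gamma T l0 rho rho' g v) :
  forall eps, 0 < eps -> exists M, forall t y, M <= t -> 0 <= y <= l0 ->
    Rabs (v t y) < eps.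
Proof.
  intros eps heps.
  assert (Hrex : forall t, ex_derive rho t) by (intros t; eexists; apply hrho_der).
  assert (Hrc : forall t, continuous rho t) by (intros t; apply (ex_derive_continuous rho); auto).
  assert (Hper := per_n rho T hrho_per).
  assert (Hper' : forall n t, rho (t - INR n * T) = rho t).
  { intros n t. rewrite <- (Hper n (t - INR n * T)). f_equal. ring. }
  assert (HrhoN : forall n, rho (INR n * T) = 1).
  { intros n. rewrite <- hrho0. rewrite <- (Hper n 0). f_equal. ring. }
  assert (Hcq : forall t, continuous (fun s => rho' s / rho s) t).
  { intros t. apply (continuous_mult rho' (fun s => / rho s)); auto.
    apply (ex_derive_continuous (fun s => / rho s)). auto_derive.
    split; auto. specialize (hrho_pos t). lra. }
  destruct (g_facts g g' hg_der0 hg0 hg_ratio_noninc hg_ratio) as [Hq1 Hgle].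
  destruct (P_facts rho hrho_pos Hrex) as [Hfc [HPd [HP0 [HPnn HPpos]]]].
  set (P := RInt (fun t => 1 / (rho t)^2) 0) in *.
  set (I := P T) in *.
  assert (HI : 0 < I) by (apply HPpos; auto).
  set (q := g' 0) in *.
  assert (Hlnq : ln q <= 0) by (rewrite <- ln_1; apply ln_le; lra).
  set (lam := (PI / l0)^2).
  assert (Hlam : 0 < lam) by (unfold lam; apply pow_lt; apply Rdiv_lt_0_compat; [apply PI_RGT_0|lra]).
  assert (Hmain : alpha * T < d * lam * I - ln q).
  { fold lam in hR0.
    set (Dn := d * lam / T * I - 1 / T * ln q) in hR0.
    assert (HDn : 0 < Dn).
    { unfold Dn. assert (0 < d * lam / T * I).
      { apply Rmult_lt_0_compat; auto. apply Rdiv_lt_0_compat; auto. apply Rmult_lt_0_compat; auto. }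
      assert (1 / T * ln q <= 0).
      { assert (0 < 1 / T) by (apply Rdiv_lt_0_compat; lra). nra. }
      lra. }
    assert (alpha < Dn).
    { apply Rmult_lt_compat_r with (r := Dn) in hR0; auto.
      replace (alpha / Dn * Dn) with alpha in hR0 by (field; lra). lra. }
    assert (alpha * T < Dn * T) by (apply Rmult_lt_compat_r; auto).
    replace (Dn * T) with (d * lam * I - ln q) in H0 by (unfold Dn; field; lra). lra. }
  assert (HL : exists L, l0 < L /\ alpha * T + ln q < d * (PI / L)^2 * I).
  { set (X := (alpha * T + ln q) / (d * I)).
    assert (HdI : 0 < d * I) by (apply Rmult_lt_0_compat; auto).
    assert (HX : alpha * T + ln q = X * (d * I)) by (unfold X; field; lra).
    destruct (Rle_or_lt X 0) as [hX|hX].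
    - exists (2 * l0). split. lra.
      assert (0 < (PI / (2 * l0))^2).
      { apply pow_lt; apply Rdiv_lt_0_compat; [apply PI_RGT_0|lra]. }
      assert (0 < d * (PI / (2 * l0))^2 * I).
      { apply Rmult_lt_0_compat; auto. apply Rmult_lt_0_compat; auto. }
      rewrite HX. nra.
    - assert (HlX : X < lam).
      { assert (X * (d * I) < lam * (d * I)) by nra. nra. }
      set (s := sqrt X).
      assert (hs : 0 < s) by (apply sqrt_lt_R0; auto).
      assert (hss : s * s = X) by (apply sqrt_sqrt; lra).
      assert (hPl : 0 < PI / l0) by (apply Rdiv_lt_0_compat; [apply PI_RGT_0|lra]).
      assert (hs1 : s < PI / l0).
      { destruct (Rle_or_lt (PI / l0) s) as [h|h]; auto.
        unfold lam in HlX. assert ((PI/l0)^2 <= s * s) by nra. lra. }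
      assert (hs2 : l0 < PI / s).
      { apply Rmult_lt_reg_r with s; auto. replace (PI / s * s) with PI by (field; lra).
        replace (PI / l0) with (PI * / l0) in hs1 by reflexivity.
        apply Rmult_lt_compat_r with (r := l0) in hs1; auto.
        replace (PI * / l0 * l0) with PI in hs1 by (field; lra). lra. }
      set (L := (l0 + PI / s) / 2).
      exists L. split. unfold L; lra.
      assert (hL : 0 < L) by (unfold L; lra).
      assert (hsL : s < PI / L).
      { apply Rmult_lt_reg_r with L; auto. replace (PI / L * L) with PI by (field; lra).
        assert (L < PI / s) by (unfold L; lra).
        apply Rmult_lt_compat_l with (r := s) in H; auto.
        replace (s * (PI / s)) with PI in H by (field; lra). lra. }
      assert (X < (PI / L)^2) by nra.
      rewrite HX. nra. }
  destruct HL as [L [HL1 HL2]].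
  set (dl := (L - l0) / 2).
  set (k := PI / L).
  set (mu := k ^ 2).
  assert (hdl : 0 < dl) by (unfold dl; lra).
  assert (hk : k * (l0 + 2 * dl) = PI) by (unfold k, dl; field; lra).
  assert (hmu : 0 <= mu) by (unfold mu; apply pow2_ge_0).
  set (r := q * exp (alpha * T - d * mu * I)).
  assert (hr0 : 0 < r) by (unfold r; apply Rmult_lt_0_compat; auto; apply exp_pos).
  assert (hr1 : r < 1).
  { unfold r. assert (exp (alpha * T - d * mu * I) < exp (- ln q)).
    { apply exp_increasing. unfold mu, k. lra. }
    rewrite exp_Ropp, exp_ln in H; auto.
    apply Rmult_lt_compat_l with (r := q) in H; auto.
    replace (q * / q) with 1 in H by (field; lra). lra. }
  set (phmin := sin (k * dl)).
  assert (Hphi : forall y, 0 <= y <= l0 -> 0 < phmin <= sin (k * (y + dl)) /\ sin (k * (y + dl)) <= 1).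
  { intros y hy. split. apply (sin_lower k dl l0 y); auto. apply SIN_bound. }
  assert (hphmin : 0 < phmin) by (destruct (Hphi 0 ltac:(lra)) as [[? ?] ?]; auto).
  destruct (hsol 0%nat) as [w0 [Hw0 [Hw0i Hw0e]]].
  assert (E0 : INR 0 * T = 0) by (simpl; ring).
  assert (E1 : INR 1 * T = T) by (simpl; ring).
  destruct (rect_max (INR 0 * T) (INR 1 * T) l0 w0 ltac:(lra) ltac:(lra) (proj1 Hw0)) as [Z0 HZ0].
  set (M0 := Rmax 0 Z0 / phmin).
  assert (hM0 : 0 <= M0) by (unfold M0; apply Rmult_le_pos; [apply Rmax_l| left; apply Rinv_0_lt_compat; auto]).
  assert (hM0' : M0 * phmin = Rmax 0 Z0) by (unfold M0; field; lra).
  set (En := fun (n : nat) t => exp (alpha * (t - INR n * T) - d * mu * P (t - INR n * T)) / rho t).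
  set (En' := fun (n : nat) t => En n t * (alpha - d * mu / (rho t)^2 - rho' t / rho t)).
  assert (HEd : forall n t, is_derive (En n) t (En' n t)).
  { intros n t. unfold En, En'.
    apply (E_der rho rho' P alpha d mu (INR n * T) t (1 / (rho (t - INR n * T))^2)); auto.
    rewrite Hper'. auto. }
  assert (HEpos : forall n t, 0 < En n t).
  { intros n t. unfold En. apply Rdiv_lt_0_compat; auto. apply exp_pos. }
  assert (Hstep : forall n, (forall y, 0 <= y <= l0 -> 0 <= g (v (INR n * T) y) <= M0 * r^n * sin (k * (y + dl))) ->
     forall t y, INR n * T < t <= INR (S n) * T -> 0 <= y <= l0 ->
       0 <= v t y <= M0 * r^n * En n t * sin (k * (y + dl))).
  { intros n HQ. destruct (hsol n) as [w [Hw [Hwi Hwe]]].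
    assert (hab : INR n * T < INR (S n) * T) by (rewrite S_INR; lra).
    assert (Hnn : forall t y, INR n * T <= t <= INR (S n) * T -> 0 <= y <= l0 -> 0 <= w t y).
    { apply (piece_nonneg d alpha gamma rho rho' _ _ l0 w); auto.
      intros y hy. rewrite Hwi; auto. apply HQ; auto. }
    assert (Hup : forall t y, INR n * T <= t <= INR (S n) * T -> 0 <= y <= l0 ->
       w t y <= M0 * r^n * En n t * sin (k * (y + dl))).
    { apply (piece_upper d alpha gamma rho rho' _ _ l0 w
        (fun t y => M0 * r^n * En n t * sin (k * (y + dl)))
        (fun t y => M0 * r^n * En' n t * sin (k * (y + dl)))
        (fun t y => M0 * r^n * En n t * (k * cos (k * (y + dl))))
        (fun t y => M0 * r^n * En n t * (- (k * k) * sin (k * (y + dl))))); auto.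
      - apply cor_mul. apply cor_t. intros t _.
        apply (ex_derive_continuous (fun t => M0 * r^n * En n t)).
        eexists. apply (is_derive_scal (En n)). apply HEd.
        apply cor_y. intros y _. apply (ex_derive_continuous (fun y => sin (k * (y + dl)))).
        auto_derive. auto.
      - intros t y ht hy. split; [|split; [|split]].
        + replace (M0 * r^n * En' n t * sin (k * (y + dl))) with ((M0 * r^n * sin (k * (y + dl))) * En' n t) by ring.
          apply (is_derive_ext (fun s => (M0 * r^n * sin (k * (y + dl))) * En n s)).
          { intros s0. change (@eq R (M0 * r ^ n * sin (k * (y + dl)) * En n s0) (M0 * r ^ n * En n s0 * sin (k * (y + dl)))). ring. }
          apply (is_derive_scal (En n)). apply HEd.
        + apply (is_derive_scal (fun x => sin (k * (x + dl)))). auto_derive. auto. ring.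
        + apply (is_derive_scal (fun x => k * cos (k * (x + dl)))). auto_derive. auto. ring.
        + unfold En'. unfold mu. right. field. specialize (hrho_pos t). lra.
      - intros t ht. destruct (Hphi 0 ltac:(lra)) as [[? ?] ?]. destruct (Hphi l0 ltac:(lra)) as [[? ?] ?].
        assert (0 <= M0 * r^n * En n t).
        { apply Rmult_le_pos. apply Rmult_le_pos; auto. left; apply pow_lt; auto. left; auto. }
        split; apply Rmult_le_pos; lra.
      - intros y hy. rewrite Hwi; auto.
        assert (En n (INR n * T) = 1).
        { unfold En. replace (INR n * T - INR n * T) with 0 by ring. rewrite HP0, HrhoN.
          replace (alpha * 0 - d * mu * 0) with 0 by ring. rewrite exp_0. field. }
        rewrite H, Rmult_1_r. apply HQ; auto. }
    intros t y ht hy. rewrite Hwe; auto. split.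
    apply Hnn; auto; lra. apply Hup; auto; lra. }
  assert (HgP : forall u, 0 <= u -> 0 <= g u).
  { intros u hu. destruct (Req_dec u 0) as [->|]. rewrite hg0; lra. left; apply hg_pos; lra. }
  assert (HQ : forall n y, 0 <= y <= l0 -> 0 <= g (v (INR n * T) y) <= M0 * r^n * sin (k * (y + dl))).
  { induction n as [|n IH]; intros y hy.
    - split. apply HgP. rewrite E0. auto.
      rewrite <- Hw0i; auto. specialize (HZ0 (INR 0 * T) y ltac:(lra) hy).
      destruct (Hphi y hy) as [[? ?] ?].
      assert (Z0 <= Rmax 0 Z0) by apply Rmax_r.
      assert (M0 * phmin <= M0 * sin (k * (y + dl))) by (apply Rmult_le_compat_l; auto).
      simpl pow. lra.
    - assert (Hb := Hstep n IH (INR (S n) * T) y ltac:(rewrite S_INR; lra) hy).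
      assert (HEb : En n (INR (S n) * T) = exp (alpha * T - d * mu * I)).
      { unfold En. rewrite HrhoN. replace (INR (S n) * T - INR n * T) with T by (rewrite S_INR; ring).
        fold I. field. }
      rewrite HEb in Hb. destruct Hb as [Hb1 Hb2].
      split. apply HgP; auto.
      eapply Rle_trans. apply Hgle; auto.
      apply Rmult_le_compat_l with (r := q) in Hb2; [|lra].
      eapply Rle_trans. apply Hb2. right. unfold r. simpl pow. ring. }
  destruct (EVT2.rect_EVT 0 T 0 l0 (fun t y => - rho t) ltac:(lra) ltac:(lra)) as [t0 [y0 [ht0 [hy0 Hrm]]]].
  { apply cor_t. intros t _. apply (continuous_opp rho). auto. }
  simpl in Hrm.
  set (K := M0 * exp (alpha * T) / rho t0).
  assert (hK : 0 <= K).
  { unfold K. apply Rmult_le_pos. apply Rmult_le_pos; auto. left; apply exp_pos.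
    left; apply Rinv_0_lt_compat; auto. }
  assert (Hbound : forall n t y, INR n * T < t <= INR (S n) * T -> 0 <= y <= l0 ->
     Rabs (v t y) <= K * r^n).
  { intros n t y ht hy.
    destruct (Hstep n (HQ n) t y ht hy) as [Hv1 Hv2].
    rewrite Rabs_right; [|lra].
    assert (hs : 0 < t - INR n * T <= T) by (rewrite S_INR in ht; lra).
    assert (HE : En n t <= exp (alpha * T) / rho t0).
    { unfold En. unfold Rdiv.
      assert (exp (alpha * (t - INR n * T) - d * mu * P (t - INR n * T)) <= exp (alpha * T)).
      { apply exp_le'. assert (0 <= P (t - INR n * T)) by (apply HPnn; lra).
        assert (0 <= d * mu * P (t - INR n * T)) by (apply Rmult_le_pos; auto; apply Rmult_le_pos; lra).
        assert (alpha * (t - INR n * T) <= alpha * T) by (apply Rmult_le_compat_l; lra). lra. }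
      assert (/ rho t <= / rho t0).
      { apply Rinv_le_contravar; auto. rewrite <- (Hper' n t).
        specialize (Hrm (t - INR n * T) 0 ltac:(lra) ltac:(lra)). lra. }
      apply Rmult_le_compat; auto. left; apply exp_pos. left; apply Rinv_0_lt_compat; auto. }
    destruct (Hphi y hy) as [[? ?] ?].
    assert (0 <= M0 * r^n) by (apply Rmult_le_pos; auto; left; apply pow_lt; auto).
    assert (M0 * r ^ n * En n t * sin (k * (y + dl)) <= M0 * r ^ n * En n t * 1).
    { apply Rmult_le_compat_l; auto. apply Rmult_le_pos; auto. left; auto. }
    assert (M0 * r ^ n * En n t <= M0 * r ^ n * (exp (alpha * T) / rho t0)).
    { apply Rmult_le_compat_l; auto. }
    unfold K. replace (M0 * exp (alpha * T) / rho t0 * r ^ n) with (M0 * r ^ n * (exp (alpha * T) / rho t0)) by (unfold Rdiv; ring).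
    lra. }
  destruct (pow_lt_1_zero r ltac:(rewrite Rabs_right; lra) (eps / (K + 1)) ltac:(apply Rdiv_lt_0_compat; lra)) as [N HN].
  exists (INR (S N) * T). intros t y ht hy.
  assert (0 < INR (S N) * T) by (apply Rmult_lt_0_compat; auto; apply lt_0_INR; lia).
  destruct (time_dec T t hT ltac:(lra)) as [n hn].
  assert (hnN : (n >= N)%nat).
  { destruct (Nat.le_gt_cases N n) as [|h]; [lia|].
    assert (INR (S n) <= INR N) by (apply le_INR; lia).
    assert (INR N < INR (S N)) by (apply lt_INR; lia).
    assert (INR (S n) * T <= INR N * T) by (apply Rmult_le_compat_r; lra).
    assert (INR N * T < INR (S N) * T) by (apply Rmult_lt_compat_r; lra). lra. }
  specialize (HN n hnN). rewrite Rabs_right in HN by (left; apply pow_lt; auto).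
  eapply Rle_lt_trans. apply (Hbound n t y hn hy).
  assert (K * r ^ n <= K * (eps / (K + 1))) by (apply Rmult_le_compat_l; lra).
  assert (K * (eps / (K + 1)) < eps).
  { apply Rmult_lt_reg_r with (K + 1); [lra|].
    replace (K * (eps / (K + 1)) * (K + 1)) with (K * eps) by (field; lra). nra. }
  lra.
Qed.
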